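(* Let $n$, $k$, $t$, $\ell$, $i$, $j$ be positive integers with $i\leq\min\{t,j\}$, $2t-i\leq k$, $t+j-i\leq\ell$ and $n\geq 2k$, and let $V$ be an $n$-dimensional vector space over $\mathbb{F}_q$. Suppose $\mathcal{F}\subseteq{V\brack k}$ is an almost $t$-intersecting family with $2t-i\leq\tau_t(\mathcal{F})\leq k$. If $X_1,X_2\in{V\brack \ell}$ with $\dim(X_1\cap X_2)=j$, then $$\frac{|\mathcal{F}(X_1,X_2;t,i)|}{q^{2(j-i)(t-i)}{j\brack i}{\ell-j\brack t-i}^{2}}\leq{k-t+1\brack 1}^{\tau_t(\mathcal{F})+i-2t}{n-\tau_t(\mathcal{F})\brack k-\tau_t(\mathcal{F})}+\sum_{m=0}^{\tau_t(\mathcal{F})+i-2t-1}{k-t+1\brack 1}^{m}.$$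
   Context: $q$ is a prime power; ${W\brack k}$ is the set of $k$-dimensional subspaces of $W$ and ${m\brack r}$ the Gaussian binomial coefficient $\prod_{s=0}^{r-1}\frac{q^{m-s}-1}{q^{r-s}-1}$ (equal to $1$ for $r=0$). A family $\mathcal{F}\subseteq{V\brack k}$ is almost $t$-intersecting if for each $F\in\mathcal{F}$ there is at most one $F'\in\mathcal{F}$ with $\dim(F\cap F')<t$. A subspace $W$ is a $t$-cover of $\mathcal{F}$ if $\dim(W\cap F)\geq t$ for all $F\in\mathcal{F}$; $\tau_t(\mathcal{F})$ is the minimum dimension of a $t$-cover. For subspaces $A,B$ of $V$, $\mathcal{F}(A,B;t,i)=\{F\in\mathcal{F}: \dim(F\cap A)\geq t,\ \dim(F\cap B)\geq t,\ \dim(F\cap A\cap B)=i\}$. *)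

(* Defs.v *)
From HB Require Import structures.
From mathcomp Require Import all_boot all_order all_algebra all_field.
From mathcomp Require Import finmap.
Set Implicit Arguments. Unset Strict Implicit. Unset Printing Implicit Defensive.
Import GRing.Theory Num.Theory.

Local Open Scope ring_scope.

(* Gaussian binomial [m r]_q = prod_{s<r} (q^(m-s)-1)/(q^(r-s)-1), as a rational;
   it equals 1 for r = 0 and 0 for r > m. *)
Definition gbin (q m r : nat) : rat :=
  \prod_(s < r) (((q ^ (m - s))%N%:R - 1) / ((q ^ (r - s))%N%:R - 1)).

Section Subspaces.
Variables (F : finFieldType) (vT : vectType F).
Local Open Scope fset_scope.

Definition k_family (k : nat) (Fam : {fset {vspace vT}}) : Prop :=
  forall A, A \in Fam -> \dim A = k.

Definition almost_t_intersecting (t : nat) (Fam : {fset {vspace vT}}) : Prop :=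
  forall A B C, A \in Fam -> B \in Fam -> C \in Fam ->
    (\dim (A :&: B)%VS < t)%N -> (\dim (A :&: C)%VS < t)%N -> B = C.

Definition t_cover (t : nat) (Fam : {fset {vspace vT}}) (W : {vspace vT}) : Prop :=
  forall A, A \in Fam -> (t <= \dim (W :&: A)%VS)%N.

Definition is_tau_t (t : nat) (Fam : {fset {vspace vT}}) (tau : nat) : Prop :=
  (exists W, t_cover t Fam W /\ \dim W = tau) /\
  (forall W, t_cover t Fam W -> (tau <= \dim W)%N).

Definition fam_AB (Fam : {fset {vspace vT}}) (A B : {vspace vT}) (t i : nat)
  : {fset {vspace vT}} :=
  [fset X in Fam | [&& (t <= \dim (X :&: A)%VS)%N, (t <= \dim (X :&: B)%VS)%N
                     & \dim (X :&: A :&: B)%VS == i]].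

End Subspaces.

(* Main.v *)
Require Import Defs.
From HB Require Import structures.
From mathcomp Require Import all_boot all_order all_algebra all_field.
From mathcomp Require Import finmap.
From mathcomp Require Import ring lra zify.
Import Order.TTheory GRing.Theory Num.Theory.
Local Open Scope ring_scope.

Lemma gbin_ratio (q m j r i : nat) : (1 < q)%N -> (i <= j)%N -> (i <= r)%N -> (j + (r - i) <= m)%N ->
  (\prod_(s < r - i) (q ^ m - q ^ (j + s))%N)%:R =
  (q ^ ((j - i) * (r - i)))%N%:R * gbin q (m - j) (r - i) *
    ((\prod_(s < r - i) (q ^ r - q ^ (i + s))%N)%:R) :> rat.
Proof.
move=> q1 ij ir jm; rewrite /gbin; set p := (r - i)%N.
have hc : (q ^ ((j - i) * p))%N%:R = \prod_(s < p) (q ^ (j - i))%N%:R :> rat.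
  by rewrite -natr_prod prod_nat_const card_ord expnM.
rewrite hc !natr_prod -mulrA -!big_split /=.
apply: eq_bigr => [[s /= sp]] _.
have q0 : (0 < q)%N by apply: ltnW.
rewrite natrB; last by apply: leq_pexp2l => //; lia.
rewrite natrB; last by apply: leq_pexp2l => //; lia.
have e1 : m = ((j - i) + (i + s) + (m - j - s))%N by lia.
have e2 : r = ((i + s) + (p - s))%N by rewrite /p; lia.
have e3 : (j + s = (j - i) + (i + s))%N by lia.
have e4 : (p - s = (p - s).-1.+1)%N by rewrite /p; lia.
rewrite {1}e1 {1}e2 e3 !expnD !natrM.
have hne : ((q ^ (p - s))%:R - 1 != 0 :> rat).
  rewrite subr_eq0 pnatr_eq1 e4 expnS.
  apply: contraTneq q1 => /eqP; rewrite muln_eq1 => /andP[/eqP -> _]; by [].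
by field.
Qed.

Lemma gbin_ge0 (q m r : nat) : (0 < q)%N -> 0 <= gbin q m r.
Proof.
move=> q0; rewrite /gbin; apply: prodr_ge0 => s _; apply: divr_ge0;
  rewrite subr_ge0 ler1n expn_gt0 q0 //.
Qed.

Lemma gbin_gt0 (q m r : nat) : (1 < q)%N -> (r <= m)%N -> 0 < gbin q m r.
Proof.
move=> q1 rm; rewrite /gbin; apply: prodr_gt0 => [[s /= sr]] _; apply: divr_gt0;
  rewrite subr_gt0 ltr1n -{1}(expn0 q) ltn_exp2l //; lia.
Qed.

Set Implicit Arguments. Unset Strict Implicit. Unset Printing Implicit Defensive.

Lemma card_tuple_cons (T : finType) p (P : T -> seq T -> bool) :
  #|[set w : p.+1.-tuple T | P (thead w) (behead w)]| =
  \sum_(x : T) #|[set w : p.-tuple T | P x w]|.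
Proof.
rewrite -sum1_card.
rewrite (reindex (fun xw : T * p.-tuple T => [tuple of xw.1 :: xw.2])) /=; last first.
  exists (fun w : p.+1.-tuple T => (thead w, [tuple of behead w])) => [[x w]|w] _ /=.
    by rewrite theadE; congr pair; apply: val_inj.
  by rewrite [RHS]tuple_eta.
rewrite (eq_bigl (fun xw : T * p.-tuple T => P xw.1 xw.2)); last first.
  by move=> [x w]; rewrite inE theadE.
rewrite -(pair_big_dep xpredT (fun x (w : p.-tuple T) => P x w) (fun _ _ => 1)) /=.
apply: eq_bigr => x _; rewrite -sum1_card; apply: eq_bigl => w; rewrite !inE.
by [].
Qed.

Local Close Scope ring_scope.
Section Count.
Variables (F : finFieldType) (vT : vectType F).
Local Notation T := (finvect_type vT).
Local Notation q := #|F|.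

Lemma cardV (V : {vspace vT}) : #|[pred v : T | v \in V]| = (q ^ \dim V)%N.
Proof. move: V. case: vT => s c V. have := (@card_vspace F (finvect_type (Vector.Pack c)) c V). move=> <-. apply: eq_card => v. by []. Qed.

Definition sp (X : {set T}) : {vspace vT} := <<(enum X : seq vT)>>%VS.
Definition toS (V : {vspace vT}) : {set T} := [set v : T | v \in V].

Lemma spK V : sp (toS V) = V.
Proof.
apply/eqP; rewrite eqEsubv; apply/andP; split.
  apply/span_subvP => v h; have h' : (v : T) \in enum (toS V) by [].
  by move: h'; rewrite mem_enum inE.
apply/subvP => v vV; apply: memv_span.
have h' : (v : T) \in enum (toS V) by rewrite mem_enum inE.
by [].
Qed.

Definition allsub : seq {vspace vT} := undup [seq sp X | X <- enum [set: {set T}]].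

Lemma allsub_uniq : uniq allsub. Proof. exact: undup_uniq. Qed.
Lemma mem_allsub V : V \in allsub.
Proof.
rewrite mem_undup; apply/mapP; exists (toS V); first by rewrite mem_enum inE.
by rewrite spK.
Qed.

Definition good (Y Z : {vspace vT}) (s : seq vT) : bool :=
  all (fun v => v \in Z) s && (\dim (Y + <<s>>)%VS == \dim Y + size s)%N.

Lemma dim_addline (Y : {vspace vT}) (x : vT) :
  \dim (Y + <[(x : vT)]>)%VS = (\dim Y + (x \notin Y))%N.
Proof.
case: (boolP (x \in Y)) => xY /=.
  by rewrite addn0; congr (\dim _); apply/addv_idPl; rewrite -memvE.
rewrite dimv_disjoint_sum ?dim_vline; last first.
  apply/eqP; rewrite -subv0; apply/subvP => y; rewrite memv_cap => /andP[yY].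
  case/vlineP => a ya; rewrite memv0; subst y.
  case: (eqVneq a 0%R) => [->|a0]; first by rewrite scale0r.
  have := memvZ (a^-1) yY; rewrite scalerA mulVf // scale1r (negPf xY) //.
have -> : (x != 0%R) = true by apply/eqP => x0; move: xY; rewrite x0 mem0v.
by [].
Qed.

Lemma good_cons Y Z x s :
  good Y Z (x :: s) = [&& x \in Z, x \notin Y & good (Y + <[(x : vT)]>)%VS Z s].
Proof.
rewrite /good /= span_cons addvA -!andbA; case: (x \in Z) => //=.
rewrite dim_addline.
have h1 : (\dim (Y + <[(x : vT)]> + <<s>>)%VS <= \dim (Y + <[(x : vT)]>)%VS + size s)%N.
  apply: leq_trans (dimv_add_leqif _ _) _; rewrite leq_add2l; exact: dim_span.
move: h1; rewrite dim_addline.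
case: (x \notin Y) => /=; rewrite ?addn0 ?addn1 ?addnS /=.
  by [].
move=> h; apply/negbTE; apply/nandP; right; by rewrite neq_ltn ltnS h.
Qed.


Lemma card_diff (Y Z : {vspace vT}) : (Y <= Z)%VS ->
  #|[pred x : T | (x \in Z) && (x \notin Y)]| = (q ^ \dim Z - q ^ \dim Y)%N.
Proof.
move=> sYZ; rewrite -!cardV -(cardID [pred v : T | v \in Y] [pred v : T | v \in Z]).
have -> : #|[predI [pred v : T | v \in Z] & [pred v : T | v \in Y]]| = #|[pred v : T | v \in Y]|.
  apply: eq_card => x; rewrite !inE; apply/andP/idP => [[] //|xY]; split => //.
  exact: (subvP sYZ).
rewrite addKn; apply: eq_card => x; rewrite !inE andbC.
by [].
Qed.

Lemma card_good p : forall (Y Z : {vspace vT}), (Y <= Z)%VS ->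
  #|[set w : p.-tuple T | good Y Z w]| = \prod_(s < p) (q ^ \dim Z - q ^ (\dim Y + s))%N.
Proof.
elim: p => [|p IH] Y Z sYZ.
  rewrite big_ord0 -[RHS](expn0 #|T|) -(card_tuple 0 T); apply: eq_card => w; rewrite !inE.
  by rewrite tuple0 /good /= span_nil addv0 addn0 eqxx.
rewrite big_ord_recl.
have -> : #|[set w : p.+1.-tuple T | good Y Z w]| =
   #|[set w : p.+1.-tuple T | good Y Z (thead w :: behead w)]|.
  by apply: eq_card => w; rewrite !inE; case/tupleP: w => x w; rewrite theadE.
rewrite (@card_tuple_cons T p (fun x s => good Y Z (x :: s))) /=.
rewrite (eq_bigr (fun x : T => if (x \in Z) && (x \notin Y) then
     \prod_(s < p) (q ^ \dim Z - q ^ (\dim Y + bump 0 s))%N else 0%N)); last first.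
  move=> x _.
  have -> : #|[set w : p.-tuple T | good Y Z (x :: w)]| =
     #|[set w : p.-tuple T | [&& x \in Z, x \notin Y & good (Y + <[(x : vT)]>) Z w]]|.
    by apply: eq_card => w; rewrite !inE; exact: good_cons.
  case: ifP => [/andP[xZ xY]|h].
    rewrite (eq_card (B := [set w : p.-tuple T | good (Y + <[(x : vT)]>) Z w])); last first.
      by move=> w; rewrite !inE xZ xY.
    rewrite IH; last by rewrite subv_add sYZ -memvE.
    rewrite dim_addline xY addn1; apply: eq_bigr => s _; by rewrite addSnnS.
  apply: eq_card0 => w; rewrite !inE.
  by move: h; case: (x \in Z); case: (x \notin Y).
rewrite -big_mkcond /= sum_nat_const card_diff // addn0 mulnC.
by [].
Qed.

Lemma sumb_count (X : Type) (s : seq X) (a : pred X) : \sum_(x <- s) (a x : nat) = count a s.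
Proof. by rewrite -sum1_count [RHS]big_mkcond; apply: eq_bigr => x _; case: (a x). Qed.

Lemma cardb (X : finType) (a : pred X) : #|[set x | a x]| = \sum_(x : X) (a x : nat).
Proof. by rewrite -sum1_card [LHS]big_mkcond; apply: eq_bigr => x _; rewrite inE; case: (a x). Qed.

Lemma count_sub (U J I : {vspace vT}) (r : nat) : (I <= J)%VS -> (J <= U)%VS ->
  (count (fun A => [&& (A <= U)%VS, \dim A == r & (A :&: J)%VS == I]) allsub *
   \prod_(s < r - \dim I) (q ^ r - q ^ (\dim I + s)) <=
   \prod_(s < r - \dim I) (q ^ \dim U - q ^ (\dim J + s)))%N.
Proof.
move=> sIJ sJU; set p := (r - \dim I)%N.
set P := (fun A => _); set pf := \prod_(s < p) _.
have step1 : forall A, P A -> (pf <= \sum_(w : p.-tuple T) (good J U w && (A == I + <<(w : seq vT)>>)%VS))%N.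
  move=> A /and3P[sAU /eqP dA /eqP AJ].
  have sIA : (I <= A)%VS by rewrite -AJ capvSl.
  rewrite /pf -dA -card_good // cardb; apply: leq_sum => w _.
  case gw: (good I A w) => //=.
  move: gw; rewrite /good => /andP[/allP wA /eqP dw].
  have sIwA : (I + <<(w : seq vT)>> <= A)%VS.
    by rewrite subv_add sIA /=; apply/span_subvP => v /wA.
  have eA : A = (I + <<(w : seq vT)>>)%VS.
    have hIr : (\dim I <= r)%N by rewrite -dA; apply: dimvS.
    by apply/eqP; rewrite eq_sym eqEdim sIwA dw dA size_tuple /p subnKC // /= leqnn.
  rewrite -eA eqxx andbT lt0b; apply/andP; split.
    by apply/allP => v /wA /(subvP sAU).
  have -> : (J + <<(w : seq vT)>> = J + A)%VS.
    by rewrite eA addvA (addv_idPl sIJ).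
  apply/eqP; have := dimv_sum_cap J A; rewrite capvC AJ dA size_tuple /p.
  move=> h; rewrite -(addnK (\dim I) (\dim (J + A))%VS) h.
  by rewrite addnBA // -dA; apply: dimvS.
rewrite mulnC -iter_addn_0 -big_const_seq.
apply: (@leq_trans (\sum_(A <- allsub | P A) \sum_(w : p.-tuple T) (good J U w && (A == I + <<(w : seq vT)>>)%VS))).
  by apply: leq_sum => A PA; exact: step1.
apply: (@leq_trans (\sum_(A <- allsub) \sum_(w : p.-tuple T) (good J U w && (A == I + <<(w : seq vT)>>)%VS))).
  rewrite [X in (_ <= X)%N](bigID P) /=; exact: leq_addr.
rewrite exchange_big /= -card_good // cardb; apply: leq_sum => w _.
case: (good J U w) => /=; last by rewrite big1.
rewrite sumb_count count_uniq_mem ?allsub_uniq //; exact: leq_b1.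
Qed.

Lemma q_gt1 : (1 < q)%N.
Proof. exact: card_finNzRing_gt1. Qed.

Lemma count_sub_rat (U J I : {vspace vT}) (r : nat) : (I <= J)%VS -> (J <= U)%VS ->
  (\dim I <= r)%N -> (\dim J + (r - \dim I) <= \dim U)%N ->
  ((count (fun A => [&& (A <= U)%VS, \dim A == r & (A :&: J)%VS == I]) allsub)%:R
   <= (q ^ ((\dim J - \dim I) * (r - \dim I)))%N%:R * gbin q (\dim U - \dim J) (r - \dim I) :> rat)%R.
Proof.
move=> sIJ sJU ir jm.
have ij : (\dim I <= \dim J)%N by apply: dimvS.
have := @count_sub U J I r sIJ sJU.
rewrite -(ler_nat rat) natrM (gbin_ratio _ _ _ _ _ q_gt1 ij ir jm) ler_pM2r //.
rewrite natr_prod; apply: prodr_gt0 => [[s /= sp]] _.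
rewrite ltr0n subn_gt0 ltn_exp2l; last exact: q_gt1.
by move: sp; rewrite ltn_subRL addnC.
Qed.

Lemma ex_sup (I W : {vspace vT}) d : (I <= W)%VS -> (\dim I + d <= \dim W)%N ->
  exists A : {vspace vT}, [/\ (I <= A)%VS, (A <= W)%VS & \dim A = (\dim I + d)%N].
Proof.
elim: d => [|d IH] sIW h; first by exists I; rewrite addn0.
have h' : (\dim I + d <= \dim W)%N by apply: leq_trans h; rewrite leq_add2l.
have [A [sIA sAW dA]] := IH sIW h'.
case: (boolP (has (fun v => v \notin A) (vbasis W))) => [/hasP[v vb vA] | /hasPn hn].
  exists (A + <[v]>)%VS; split.
  - exact: subv_trans sIA (addvSl _ _).
  - by rewrite subv_add sAW -memvE vbasis_mem.
  - by rewrite dim_addline vA dA addn1 addnS.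
exfalso.
have sWA : (W <= A)%VS.
  rewrite -(span_basis (vbasisP W)); apply/span_subvP => v vb.
  by have := hn v vb; rewrite negbK.
have := dimvS sWA; rewrite dA; move: h; rewrite addnS => h1 h2.
by have := leq_trans h1 h2; rewrite ltnn.
Qed.

Lemma ex_sub_compl (F0 S : {vspace vT}) r : (r + \dim (F0 :&: S) <= \dim F0)%N ->
  exists U : {vspace vT}, [/\ (U <= F0)%VS, \dim U = r & (U :&: S)%VS = 0%VS].
Proof.
move=> h.
have h2 : (\dim (0%VS : {vspace vT}) + r <= \dim (F0 :\: S))%N.
  rewrite dimv0 add0n; have := dimv_cap_compl F0 S; lia.
have [U [_ sU dU]] := ex_sup (sub0v _) h2.
exists U; split.
- exact: subv_trans sU (diffvSl _ _).
- by rewrite dU dimv0.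
- apply/eqP; rewrite -subv0 -(capv_diff F0 S); apply: capvS => //.
Qed.

Lemma count_le1 (s : seq {vspace vT}) (P : pred {vspace vT}) : uniq s ->
  (forall A B, A \in s -> B \in s -> P A -> P B -> A = B) -> (count P s <= 1)%N.
Proof.
move=> us h; rewrite -size_filter.
case E: (filter P s) => [|x l] //.
have xs : x \in filter P s by rewrite E mem_head.
move: (xs); rewrite mem_filter => /andP[Px xs'].
have sub : {subset filter P s <= [:: x]}.
  move=> y; rewrite mem_filter => /andP[Py ys]; by rewrite inE (h y x).
by have := uniq_leq_size (filter_uniq P us) sub; rewrite E.
Qed.

Lemma count_mono (s1 s2 : seq {vspace vT}) (P Q : pred {vspace vT}) : uniq s1 ->
  {in s1, forall x, P x -> Q x && (x \in s2)} -> (count P s1 <= count Q s2)%N.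
Proof.
rewrite -!size_filter => us h; apply: uniq_leq_size; first exact: filter_uniq.
move=> x; rewrite !mem_filter => /andP[Px xs]; have /andP[-> ->] := h x xs Px.
by [].
Qed.

Lemma branch (Fam : {fset {vspace vT}}) (k t tau : nat) (G : rat) :
  k_family k Fam -> almost_t_intersecting t Fam ->
  (forall W, t_cover t Fam W -> tau <= \dim W)%N -> (t <= k)%N -> (0 < t)%N -> (0 <= G)%R ->
  (forall S : {vspace vT}, \dim S = tau ->
     ((count (fun A => (S <= A)%VS) Fam)%:R <= G :> rat)%R) ->
  forall d (S : {vspace vT}), (\dim S + d = tau)%N ->
  ((count (fun A => (S <= A)%VS) Fam)%:R <=
     (gbin q (k - t + 1) 1) ^+ d * G + \sum_(m < d) (gbin q (k - t + 1) 1) ^+ m :> rat)%R.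
Proof.
move=> kF aF tauF tk t0 G0 base; set c := gbin _ _ _.
have c0 : (0 <= c)%R by apply: gbin_ge0; apply: ltnW; exact: q_gt1.
have B0 : forall d, (0 <= c ^+ d * G + \sum_(m < d) c ^+ m :> rat)%R.
  move=> d; apply: addr_ge0; first by apply: mulr_ge0 => //; apply: exprn_ge0.
  by apply: sumr_ge0 => m _; apply: exprn_ge0.
elim=> [|d IH] S dS.
  by rewrite expr0 mul1r big_ord0 addr0; apply: base; rewrite addn0 in dS.
case: (boolP (has (fun A => (\dim (S :&: A) < t)%N) Fam)) => [/hasP[F0 F0in F0lt] | /hasPn hn]; last first.
  exfalso; have : (tau <= \dim S)%N.
    apply: tauF => A AF; by have := hn A AF; rewrite -leqNgt.
  lia.
have dF0 : \dim F0 = k := kF F0 F0in.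
have [U [sUF0 dU US0]] : exists U : {vspace vT},
    [/\ (U <= F0)%VS, \dim U = (k - t + 1)%N & (U :&: S)%VS = 0%VS].
  apply: ex_sub_compl; rewrite capvC dF0; lia.
set lines := fun L : {vspace vT} => [&& (L <= U)%VS, \dim L == 1%N & (L :&: 0)%VS == 0%VS].
have cl : ((count lines allsub)%:R <= c)%R.
  have := @count_sub_rat U 0%VS 0%VS 1 (sub0v _) (sub0v _).
  have dz : \dim (0%VS : {vspace vT}) = 0%N by rewrite dimv0.
  rewrite !dz dU !subn0 mul0n expn0 mul1r => h; apply: h => //; lia.
have key : (count (fun A => (S <= A)%VS) Fam <=
    count (fun A => \dim (F0 :&: A) < t) Fam +
    \sum_(L <- allsub | lines L) count (fun A => (S + L <= A)%VS) Fam)%N.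
  rewrite -!sumb_count; under [X in (_ <= _ + X)%N]eq_bigr do rewrite -sumb_count.
  rewrite exchange_big /= -big_split /= big_seq [X in (_ <= X)%N]big_seq.
  apply: leq_sum => A AF.
  case: (boolP (S <= A)%VS) => SA //=.
  case: (boolP (\dim (F0 :&: A) < t)%N) => lt //=.
  rewrite add0n.
  have dA : \dim A = k := kF A AF.
  have dUA : (1 <= \dim (U :&: A))%N.
    have h1 := dimv_sum_cap U (F0 :&: A).
    have h2 : (\dim (U + F0 :&: A) <= k)%N.
      by rewrite -dF0; apply: dimvS; rewrite subv_add sUF0 capvSl.
    have h3 : (\dim (U :&: (F0 :&: A)) <= \dim (U :&: A))%N.
      by apply: dimvS; apply: capvS => //; exact: capvSr.
    move: lt; rewrite -leqNgt => lt; lia.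
  set u := vpick (U :&: A)%VS.
  have u0 : u != 0%R.
    rewrite vpick0; apply/eqP => h; move: dUA; by rewrite h dimv0.
  have uUA := memv_pick (U :&: A)%VS; rewrite -/u memv_cap in uUA.
  case/andP: uUA => uU uA.
  rewrite (big_rem <[u]>%VS) ?mem_allsub //.
  have -> : lines <[u]>%VS by rewrite /lines -memvE uU dim_vline u0 capv0 eqxx.
  have -> : (S + <[u]> <= A)%VS by rewrite subv_add SA -memvE.
  by [].
have ex1 : (count (fun A => \dim (F0 :&: A) < t) Fam <= 1)%N.
  apply: count_le1; first exact: fset_uniq.
  move=> A B AF BF hA hB; exact: (aF F0 A B F0in AF BF hA hB).
have hL : forall L, lines L ->
    ((count (fun A => (S + L <= A)%VS) Fam)%:R <= c ^+ d * G + \sum_(m < d) c ^+ m :> rat)%R.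
  move=> L /and3P[sLU /eqP dL _]; apply: IH.
  have LS : (L :&: S)%VS = 0%VS.
    apply/eqP; rewrite -subv0 -US0; apply: capvS => //.
  rewrite addvC dimv_disjoint_sum // dL; lia.
apply: (@le_trans _ _ (1 + (count lines allsub)%:R * (c ^+ d * G + \sum_(m < d) c ^+ m))%R).
  rewrite -(ler_nat rat) in key; apply: (le_trans key); rewrite natrD.
  apply: lerD; first by move: ex1; rewrite -(ler_nat rat).
  rewrite natr_sum -sum1_count natr_sum mulr_suml; apply: ler_sum => L hLl.
  by rewrite mul1r; apply: hL.
apply: (@le_trans _ _ (1 + c * (c ^+ d * G + \sum_(m < d) c ^+ m))%R).
  by rewrite lerD2l; apply: ler_wpM2r.
have hs : (\sum_(m < d.+1) c ^+ m = 1 + c * \sum_(m < d) c ^+ m :> rat)%R.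
  rewrite big_ord_recl expr0 mulr_sumr; congr (_ + _)%R; apply: eq_bigr => i _.
  by rewrite exprS.
rewrite hs exprS le_eqVlt; apply/orP; left; apply/eqP; ring.
Qed.

Lemma sum_ge_term (s : seq {vspace vT}) (Pp : pred {vspace vT}) (f : {vspace vT} -> nat) x :
  x \in s -> Pp x -> (f x <= \sum_(y <- s | Pp y) f y)%N.
Proof. by move=> xs Px; rewrite (big_rem x) //= Px leq_addr. Qed.

Lemma cover (Fam : {fset {vspace vT}}) (X1 X2 : {vspace vT}) (t i : nat) : (i <= t)%N ->
  (#|` fam_AB Fam X1 X2 t i| <=
   \sum_(I <- allsub | [&& (I <= X1 :&: X2)%VS, \dim I == i & (I :&: 0)%VS == 0%VS])
   \sum_(A1 <- allsub | [&& (A1 <= X1)%VS, \dim A1 == t & (A1 :&: (X1 :&: X2))%VS == I])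
   \sum_(A2 <- allsub | [&& (A2 <= X2)%VS, \dim A2 == t & (A2 :&: (X1 :&: X2))%VS == I])
     count (fun G => (A1 + A2 <= G)%VS) Fam)%N.
Proof.
move=> it.
set PAB := fun G : {vspace vT} => [&& (t <= \dim (G :&: X1)%VS)%N, (t <= \dim (G :&: X2)%VS)%N
                     & \dim (G :&: X1 :&: X2)%VS == i].
have h1 : (#|` fam_AB Fam X1 X2 t i| <= count PAB Fam)%N.
  rewrite -(count_predT (fam_AB Fam X1 X2 t i)).
  apply: count_mono; first exact: fset_uniq.
  by move=> G; rewrite /fam_AB inE => /andP[GF PG] _; apply/andP; split.
apply: (leq_trans h1); rewrite -sumb_count.
under [X in (_ <= X)%N]eq_bigr => I _ do under eq_bigr => A1 _ do under eq_bigr => A2 _ do rewrite -sumb_count.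
under [X in (_ <= X)%N]eq_bigr => I _ do under eq_bigr => A1 _ do rewrite exchange_big /=.
under [X in (_ <= X)%N]eq_bigr => I _ do rewrite exchange_big /=.
rewrite exchange_big /= big_seq [X in (_ <= X)%N]big_seq; apply: leq_sum => G GF.
case: (boolP (PAB G)) => // /and3P[t1 t2 /eqP di].
set I := (G :&: X1 :&: X2)%VS.
have sIJ : (I <= X1 :&: X2)%VS by apply/subvP => v; rewrite !memv_cap => /andP[/andP[_ ->] ->].
have sI1 : (I <= G :&: X1)%VS by apply: capvSl.
have sI2 : (I <= G :&: X2)%VS by apply/subvP => v; rewrite !memv_cap => /andP[/andP[-> _] ->].
have [A1 [sIA1 sA1 dA1]] : exists A : {vspace vT}, [/\ (I <= A)%VS, (A <= G :&: X1)%VS & \dim A = (\dim I + (t - i))%N].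
  by apply: ex_sup => //; rewrite di subnKC.
have [A2 [sIA2 sA2 dA2]] : exists A : {vspace vT}, [/\ (I <= A)%VS, (A <= G :&: X2)%VS & \dim A = (\dim I + (t - i))%N].
  by apply: ex_sup => //; rewrite di subnKC.
rewrite di subnKC // in dA1 dA2.
have cap1 : (A1 :&: (X1 :&: X2))%VS = I.
  apply/eqP; rewrite eqEsubv; apply/andP; split; last by rewrite subv_cap sIA1 sIJ.
  apply/subvP => v; rewrite !memv_cap => /andP[vA /andP[v1 v2]].
  by have := subvP sA1 v vA; rewrite memv_cap => /andP[-> _]; rewrite v1 v2.
have cap2 : (A2 :&: (X1 :&: X2))%VS = I.
  apply/eqP; rewrite eqEsubv; apply/andP; split; last by rewrite subv_cap sIA2 sIJ.
  apply/subvP => v; rewrite !memv_cap => /andP[vA /andP[v1 v2]].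
  by have := subvP sA2 v vA; rewrite memv_cap => /andP[-> _]; rewrite v1 v2.
rewrite (big_rem I) ?mem_allsub //= sIJ di eqxx capv0 eqxx /=.
apply: (leq_trans _ (leq_addr _ _)).
rewrite (big_rem A1) ?mem_allsub //= dA1 eqxx cap1 eqxx (subv_trans sA1 (capvSr _ _)) /=.
apply: (leq_trans _ (leq_addr _ _)).
rewrite (big_rem A2) ?mem_allsub //= dA2 eqxx cap2 eqxx (subv_trans sA2 (capvSr _ _)) /=.
apply: (leq_trans _ (leq_addr _ _)).
rewrite subv_add (subv_trans sA1 (capvSl _ _)) (subv_trans sA2 (capvSl _ _)).
by [].
Qed.

Lemma dim_pair (X1 X2 I A1 A2 : {vspace vT}) (t i : nat) :
  [&& (I <= X1 :&: X2)%VS, \dim I == i & (I :&: 0)%VS == 0%VS] ->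
  [&& (A1 <= X1)%VS, \dim A1 == t & (A1 :&: (X1 :&: X2))%VS == I] ->
  [&& (A2 <= X2)%VS, \dim A2 == t & (A2 :&: (X1 :&: X2))%VS == I] ->
  (\dim (A1 + A2)%VS + i = 2 * t)%N.
Proof.
move=> /and3P[sIJ /eqP dI _] /and3P[s1 /eqP d1 /eqP c1] /and3P[s2 /eqP d2 /eqP c2].
have e : (A1 :&: A2)%VS = I.
  apply/eqP; rewrite eqEsubv; apply/andP; split.
    rewrite -c1; apply/subvP => v; rewrite !memv_cap => /andP[vA1 vA2].
    by rewrite vA1 (subvP s1 v vA1) (subvP s2 v vA2).
  by rewrite subv_cap -{1}c1 -{1}c2 !capvSl.
by rewrite -dI -e dimv_sum_cap d1 d2 addnn mul2n.
Qed.

End Count.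

Lemma sum_constR (X : Type) (s : seq X) (P : pred X) (b : rat) :
  (\sum_(x <- s | P x) b = (count P s)%:R * b)%R.
Proof. by rewrite -sum1_count natr_sum mulr_suml; apply: eq_bigr => x _; rewrite mul1r. Qed.

Unset Implicit Arguments.
Set Strict Implicit.

Theorem lemma6p1 (F : finFieldType) (vT : vectType F) (q n k t l i j : nat)
  (Fam : {fset {vspace vT}}) (tau : nat) (X1 X2 : {vspace vT}) :
  #|F| = q ->
  \dim (fullv : {vspace vT}) = n ->
  (0 < n)%N -> (0 < k)%N -> (0 < t)%N -> (0 < l)%N -> (0 < i)%N -> (0 < j)%N ->
  (i <= minn t j)%N -> (2 * t - i <= k)%N -> (t + j - i <= l)%N -> (2 * k <= n)%N ->
  k_family k Fam ->
  almost_t_intersecting t Fam ->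
  is_tau_t t Fam tau ->
  (2 * t - i <= tau)%N -> (tau <= k)%N ->
  \dim X1 = l -> \dim X2 = l -> \dim (X1 :&: X2)%VS = j ->
  ((#|` fam_AB Fam X1 X2 t i|)%:R
     / ((q ^ (2 * (j - i) * (t - i)))%N%:R * gbin q j i * (gbin q (l - j) (t - i)) ^+ 2)
   <= (gbin q (k - t + 1) 1) ^+ (tau + i - 2 * t) * gbin q (n - tau) (k - tau)
      + \sum_(m < tau + i - 2 * t) (gbin q (k - t + 1) 1) ^+ m :> rat)%R.
Proof.
move=> hq hn n0 k0 t0 l0 i0 j0 hij h2tk htjl hkn kF aF [_ tauF] htau1 htau2 d1 d2 d12.
subst q.
have q1 : (1 < #|F|)%N := card_finNzRing_gt1 F.
have it : (i <= t)%N by move: hij; rewrite leq_min => /andP[].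
have ij : (i <= j)%N by move: hij; rewrite leq_min => /andP[].
set c := gbin #|F| (k - t + 1) 1.
set G := gbin #|F| (n - tau) (k - tau).
set d := (tau + i - 2 * t)%N.
set B := (c ^+ d * G + \sum_(m < d) c ^+ m)%R.
have G0 : (0 <= G)%R by apply: gbin_ge0; lia.
have base : forall S : {vspace vT}, \dim S = tau ->
    ((count (fun A => (S <= A)%VS) Fam)%:R <= G :> rat)%R.
  move=> S dS.
  have h1 : (count (fun A => (S <= A)%VS) Fam <= count (fun A => [&& (A <= fullv)%VS, \dim A == k & (A :&: S)%VS == S]) (@allsub F vT))%N.
    apply: count_mono; first exact: fset_uniq.
    move=> A AF SA; rewrite subvf (kF A AF) eqxx mem_allsub andbT /=.
    by apply/eqP/capv_idPr.
  rewrite -(ler_nat rat) in h1; apply: (le_trans h1).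
  have := @count_sub_rat F vT fullv S S k (subvv S) (subvf S).
  rewrite subnn mul0n expn0 mul1r hn dS => h; apply: h; lia.
have tk : (t <= k)%N by lia.
have Bnd := branch kF aF tauF tk t0 G0 base.
have B0 : (0 <= B)%R.
  apply: addr_ge0; first by apply: mulr_ge0 => //; apply: exprn_ge0; apply: gbin_ge0; lia.
  by apply: sumr_ge0 => m _; apply: exprn_ge0; apply: gbin_ge0; lia.
set c1 := ((#|F| ^ ((j - i) * (t - i)))%N%:R * gbin #|F| (l - j) (t - i) : rat)%R.
have c10 : (0 <= c1)%R by apply: mulr_ge0; [apply: ler0n | apply: gbin_ge0; lia].
have hD : (0 < (#|F| ^ (2 * (j - i) * (t - i)))%N%:R * gbin #|F| j i * gbin #|F| (l - j) (t - i) ^+ 2 :> rat)%R.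
  apply: mulr_gt0; first apply: mulr_gt0.
  - by rewrite ltr0n expn_gt0; apply/orP; left; lia.
  - by apply: gbin_gt0.
  - by apply: exprn_gt0; apply: gbin_gt0 => //; lia.
rewrite ler_pdivrMr //.
have hc := @cover F vT Fam X1 X2 t i it.
rewrite -(ler_nat rat) in hc; apply: (le_trans hc).
have cP : forall (X : {vspace vT}) (I : {vspace vT}), \dim X = l -> (X1 :&: X2 <= X)%VS ->
    [&& (I <= X1 :&: X2)%VS, \dim I == i & (I :&: 0)%VS == 0%VS] ->
    ((count (fun A => [&& (A <= X)%VS, \dim A == t & (A :&: (X1 :&: X2))%VS == I]) (@allsub F vT))%:R <= c1 :> rat)%R.
  move=> X I dX sJX /and3P[sIJ /eqP dI _].
  have := @count_sub_rat F vT X (X1 :&: X2)%VS I t sIJ sJX.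
  rewrite dX d12 dI => h; apply: h; lia.
apply: (@le_trans _ _ (\sum_(I <- @allsub F vT | [&& (I <= X1 :&: X2)%VS, \dim I == i & (I :&: 0)%VS == 0%VS]) (c1 * (c1 * B)))%R).
  rewrite natr_sum; apply: ler_sum => I hI.
  rewrite natr_sum.
  apply: (@le_trans _ _ (\sum_(A1 <- @allsub F vT | [&& (A1 <= X1)%VS, \dim A1 == t & (A1 :&: (X1 :&: X2))%VS == I])
        ((count (fun A => [&& (A <= X2)%VS, \dim A == t & (A :&: (X1 :&: X2))%VS == I]) (@allsub F vT))%:R * B))%R).
    apply: ler_sum => A1 hA1; rewrite natr_sum.
    apply: (@le_trans _ _ (\sum_(A2 <- @allsub F vT | [&& (A2 <= X2)%VS, \dim A2 == t & (A2 :&: (X1 :&: X2))%VS == I]) B)%R).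
      apply: ler_sum => A2 hA2; apply: Bnd; have := dim_pair hI hA1 hA2; lia.
    by rewrite sum_constR.
  rewrite sum_constR; apply: ler_pM.
  - exact: ler0n.
  - by apply: mulr_ge0 => //; apply: ler0n.
  - by apply: cP => //; apply: capvSl.
  - by apply: ler_wpM2r => //; apply: cP => //; apply: capvSr.
rewrite sum_constR.
apply: (@le_trans _ _ (gbin #|F| j i * (c1 * (c1 * B)))%R).
  apply: ler_wpM2r; first by apply: mulr_ge0 => //; apply: mulr_ge0.
  have := @count_sub_rat F vT (X1 :&: X2)%VS 0%VS 0%VS i (sub0v _) (sub0v _).
  have dz : \dim (0%VS : {vspace vT}) = 0%N by rewrite dimv0.
  rewrite !dz !subn0 mul0n expn0 mul1r d12 => h; apply: h; lia.
rewrite le_eqVlt; apply/orP; left; apply/eqP.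
have e : ((#|F| ^ (2 * (j - i) * (t - i)))%N%:R = (#|F| ^ ((j - i) * (t - i)))%N%:R ^+ 2 :> rat)%R.
  by rewrite -natrX -expnM; congr (GRing.natmul _ (_ ^ _)); lia.
rewrite e /c1; ring.
Qed.
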